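(* Let $S\subset\mathbf R^4$ be a surface and $p\in S$ a flat inflection point. Then for every unit normal vector $\nu\in N_pS$, the image of $S$ near $p$ under the orthogonal projection of $\mathbf R^4$ onto the hyperplane $\nu^\perp\cong\mathbf R^3$ (a surface in $\mathbf R^3$ near the image of $p$) has zero Gaussian curvature at the image of $p$, i.e. the image of $p$ lies on the parabolic curve of that projected surface.
   Context: Use an adapted orthonormal frame $e_1,e_2$ (tangent), $e_3,e_4$ (normal) at $p$; the second fundamental form is $\mathbf{II}(u)=(au_1^2+2bu_1u_2+cu_2^2)e_3+(eu_1^2+2fu_1u_2+gu_2^2)e_4$ for $u=u_1e_1+u_2e_2$. The curvature ellipse at $p$ is $\{\mathbf{II}(u):|u|=1\}\subset N_pS$ with $p$ as origin. $p$ is an inflection point if the curvature ellipse is a (possibly degenerate) segment contained in a line through the origin; it is a flat inflection point if moreover the origin is an endpoint of this segment. Equivalently, flat inflection points are the points where $\Delta=0$ and $K=0$, with $K=(ac-b^2)+(eg-f^2)$ and $\Delta=(ac-b^2)(eg-f^2)-\tfrac14(ag+ce-2bf)^2$. *)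

(* Defs.v *)
From Stdlib Require Import Reals List.
From Coquelicot Require Import Coquelicot.
Open Scope R_scope.

Definition PDx (h : R -> R -> R) : R -> R -> R :=
  fun x y => Derive (fun t => h t y) x.
Definition PDy (h : R -> R -> R) : R -> R -> R :=
  fun x y => Derive (fun t => h x t) y.

Fixpoint iterD (w : list bool) (h : R -> R -> R) : R -> R -> R :=
  match w with
  | nil => h
  | cons true w' => PDx (iterD w' h)
  | cons false w' => PDy (iterD w' h)
  end.

Definition smooth2 (h : R -> R -> R) : Prop :=
  forall (w : list bool) (x y : R),
    ex_derive (fun t => iterD w h t y) x /\ ex_derive (fun t => iterD w h x t) y.

(** Second fundamental form at p in an adapted frame, with coefficients
    a b c (e3-component) and e f g (e4-component); u = u1 e1 + u2 e2. *)
Definition II (a b c e f g : R) (u1 u2 : R) : R * R :=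
  (a * u1 ^ 2 + 2 * b * u1 * u2 + c * u2 ^ 2,
   e * u1 ^ 2 + 2 * f * u1 * u2 + g * u2 ^ 2).

Definition on_curvature_ellipse (a b c e f g : R) (P : R * R) : Prop :=
  exists u1 u2, u1 ^ 2 + u2 ^ 2 = 1 /\ II a b c e f g u1 u2 = P.

Definition on_segment (A B P : R * R) : Prop :=
  exists s, 0 <= s <= 1 /\
    P = ((1 - s) * fst A + s * fst B, (1 - s) * snd A + s * snd B).

Definition collinear_origin (A B : R * R) : Prop :=
  fst A * snd B - snd A * fst B = 0.

Definition inflection_point (a b c e f g : R) : Prop :=
  exists A B, collinear_origin A B /\
    (forall P, on_curvature_ellipse a b c e f g P <-> on_segment A B P).

Definition flat_inflection_point (a b c e f g : R) : Prop :=
  exists A B, collinear_origin A B /\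
    (forall P, on_curvature_ellipse a b c e f g P <-> on_segment A B P) /\
    (A = (0, 0) \/ B = (0, 0)).

(** The surface near p = 0, in Monge form w.r.t. the adapted frame
    e1, e2, e3, e4 (taken as the standard basis of R^4). *)
Definition monge_surface (f1 f2 : R -> R -> R) (x y : R) : R * R * R * R :=
  (x, y, f1 x y, f2 x y).

(** Orthogonal projection of R^4 onto nu^perp, nu = n3 e3 + n4 e4 a unit
    normal, written in the orthonormal basis (e1, e2, -n4 e3 + n3 e4) of
    nu^perp (identified with R^3). *)
Definition proj_nu (n3 n4 : R) (P : R * R * R * R) : R * R * R :=
  match P with
  | (x1, x2, x3, x4) => (x1, x2, - n4 * x3 + n3 * x4)
  end.

Definition gauss_curv_graph (h : R -> R -> R) (x y : R) : R :=
  (PDx (PDx h) x y * PDy (PDy h) x y - PDy (PDx h) x y ^ 2)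
  / (1 + PDx h x y ^ 2 + PDy h x y ^ 2) ^ 2.

(* Main.v *)
Require Import Defs.
From Stdlib Require Import Reals List Lra Psatz FunctionalExtensionality.
From Coquelicot Require Import Coquelicot.
Open Scope R_scope.

Definition lin (al be : R) (F G : R -> R -> R) : R -> R -> R :=
  fun x y => al * F x y + be * G x y.

Lemma PDx_lin al be F G :
  (forall x y, ex_derive (fun t => F t y) x) ->
  (forall x y, ex_derive (fun t => G t y) x) ->
  PDx (lin al be F G) = lin al be (PDx F) (PDx G).
Proof.
  intros HF HG. apply functional_extensionality; intro x.
  apply functional_extensionality; intro y.
  unfold PDx, lin.
  rewrite Derive_plus.
  - rewrite !Derive_scal. reflexivity.
  - apply ex_derive_scal; auto.
  - apply ex_derive_scal; auto.
Qed.

Lemma PDy_lin al be F G :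
  (forall x y, ex_derive (fun t => F x t) y) ->
  (forall x y, ex_derive (fun t => G x t) y) ->
  PDy (lin al be F G) = lin al be (PDy F) (PDy G).
Proof.
  intros HF HG. apply functional_extensionality; intro x.
  apply functional_extensionality; intro y.
  unfold PDy, lin.
  rewrite Derive_plus.
  - rewrite !Derive_scal. reflexivity.
  - apply ex_derive_scal; auto.
  - apply ex_derive_scal; auto.
Qed.

Lemma psd_all al be ga :
  (forall u1 u2, u1^2 + u2^2 = 1 -> 0 <= al*u1^2 + 2*be*u1*u2 + ga*u2^2) ->
  forall x y, 0 <= al*x^2 + 2*be*x*y + ga*y^2.
Proof.
  intros H x y.
  destruct (Req_dec (x^2+y^2) 0) as [E|E].
  - assert (x = 0) by nra. assert (y = 0) by nra. subst. lra.
  - assert (Hp : 0 < x^2+y^2) by nra.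
    set (r := sqrt (x^2+y^2)).
    assert (Hr : 0 < r) by (apply sqrt_lt_R0; lra).
    assert (Hr2 : r * r = x^2+y^2) by (apply sqrt_sqrt; lra).
    specialize (H (x/r) (y/r)).
    assert (U : (x/r)^2 + (y/r)^2 = 1).
    { field_simplify; [|lra]. rewrite <- Hr2. field. lra. }
    specialize (H U).
    assert (Eq : al*(x/r)^2 + 2*be*(x/r)*(y/r) + ga*(y/r)^2
                 = (al*x^2 + 2*be*x*y + ga*y^2) / (r*r)) by (field; lra).
    rewrite Eq in H.
    assert (0 < r*r) by nra.
    apply (Rmult_le_compat_r (r*r)) in H; [|lra].
    unfold Rdiv in H. rewrite Rmult_0_l, Rmult_assoc, Rinv_l, Rmult_1_r in H; lra.
Qed.

Lemma psd_zero_det al be ga x0 y0 :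
  (forall x y, 0 <= al*x^2 + 2*be*x*y + ga*y^2) ->
  x0^2 + y0^2 = 1 -> al*x0^2 + 2*be*x0*y0 + ga*y0^2 = 0 ->
  al*ga - be^2 = 0.
Proof.
  intros H U Z.
  assert (Ha : 0 <= al) by (specialize (H 1 0); lra).
  assert (Hg : 0 <= ga) by (specialize (H 0 1); lra).
  set (L1 := al*x0 + be*y0). set (L2 := be*x0 + ga*y0).
  assert (E1 : L1 = 0).
  { set (t := - L1 / (al+1)).
    assert (Ht : t*(al+1) = - L1) by (unfold t; field; lra).
    specialize (H (x0 + t) y0).
    assert (0 <= 2*t*L1 + al*t^2).
    { replace (2*t*L1 + al*t^2) with (al*(x0+t)^2 + 2*be*(x0+t)*y0 + ga*y0^2
        - (al*x0^2 + 2*be*x0*y0 + ga*y0^2)) by (unfold L1; ring). lra. }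
    assert (t^2*(al+2) <= 0) by nra.
    assert (t = 0) by nra. nra. }
  assert (E2 : L2 = 0).
  { set (t := - L2 / (ga+1)).
    assert (Ht : t*(ga+1) = - L2) by (unfold t; field; lra).
    specialize (H x0 (y0 + t)).
    assert (0 <= 2*t*L2 + ga*t^2).
    { replace (2*t*L2 + ga*t^2) with (al*x0^2 + 2*be*x0*(y0+t) + ga*(y0+t)^2
        - (al*x0^2 + 2*be*x0*y0 + ga*y0^2)) by (unfold L2; ring). lra. }
    assert (t^2*(ga+2) <= 0) by nra.
    assert (t = 0) by nra. nra. }
  assert (F1 : x0*(al*ga - be^2) = ga*L1 - be*L2) by (unfold L1, L2; ring).
  assert (F2 : y0*(al*ga - be^2) = al*L2 - be*L1) by (unfold L1, L2; ring).
  rewrite E1, E2 in F1, F2.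
  replace (al*ga - be^2) with ((x0^2+y0^2)*(al*ga - be^2)) by (rewrite U; ring).
  replace ((x0^2+y0^2)*(al*ga - be^2)) with (x0*(x0*(al*ga - be^2)) + y0*(y0*(al*ga - be^2))) by ring.
  rewrite F1, F2. ring.
Qed.

Lemma key a b c e f g V1 V2 :
  (forall u1 u2, u1^2+u2^2 = 1 -> exists s, 0 <= s /\
     a*u1^2 + 2*b*u1*u2 + c*u2^2 = s*V1 /\ e*u1^2 + 2*f*u1*u2 + g*u2^2 = s*V2) ->
  (exists x0 y0, x0^2+y0^2 = 1 /\ a*x0^2 + 2*b*x0*y0 + c*y0^2 = 0 /\
     e*x0^2 + 2*f*x0*y0 + g*y0^2 = 0) ->
  forall n3 n4,
  (-n4*a + n3*e)*(-n4*c + n3*g) - (-n4*b + n3*f)^2 = 0.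
Proof.
  intros H [x0 [y0 [U [Z1 Z2]]]] n3 n4.
  set (A := -n4*a + n3*e). set (B := -n4*b + n3*f). set (C := -n4*c + n3*g).
  set (k := -n4*V1 + n3*V2).
  assert (HQ : forall u1 u2, u1^2+u2^2 = 1 -> exists s, 0 <= s /\
            A*u1^2 + 2*B*u1*u2 + C*u2^2 = s*k).
  { intros u1 u2 Hu. destruct (H u1 u2 Hu) as [s [Hs [E1 E2]]].
    exists s. split; auto. unfold A, B, C, k.
    replace ((-n4*a + n3*e)*u1^2 + 2*(-n4*b + n3*f)*u1*u2 + (-n4*c + n3*g)*u2^2)
      with (-n4*(a*u1^2 + 2*b*u1*u2 + c*u2^2) + n3*(e*u1^2 + 2*f*u1*u2 + g*u2^2)) by ring.
    rewrite E1, E2. ring. }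
  destruct (Req_dec k 0) as [K|K].
  - destruct (HQ 1 0 ltac:(lra)) as [s1 [_ Q1]].
    destruct (HQ 0 1 ltac:(lra)) as [s2 [_ Q2]].
    destruct (HQ (3/5) (4/5) ltac:(lra)) as [s3 [_ Q3]].
    rewrite K in Q1, Q2, Q3.
    assert (A = 0) by nra. assert (C = 0) by nra. assert (B = 0) by nra.
    rewrite H0, H1, H2. ring.
  - assert (Hp : forall u1 u2, u1^2+u2^2 = 1 ->
              0 <= (k*A)*u1^2 + 2*(k*B)*u1*u2 + (k*C)*u2^2).
    { intros u1 u2 Hu. destruct (HQ u1 u2 Hu) as [s [Hs E]].
      replace ((k*A)*u1^2 + 2*(k*B)*u1*u2 + (k*C)*u2^2)
        with (k*(A*u1^2 + 2*B*u1*u2 + C*u2^2)) by ring.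
      rewrite E. nra. }
    pose proof (psd_all _ _ _ Hp) as Hall.
    assert (Z : (k*A)*x0^2 + 2*(k*B)*x0*y0 + (k*C)*y0^2 = 0).
    { replace ((k*A)*x0^2 + 2*(k*B)*x0*y0 + (k*C)*y0^2) with
        (k*(-n4*(a*x0^2 + 2*b*x0*y0 + c*y0^2) + n3*(e*x0^2 + 2*f*x0*y0 + g*y0^2)))
        by (unfold A, B, C; ring).
      rewrite Z1, Z2. ring. }
    pose proof (psd_zero_det _ _ _ _ _ Hall U Z) as D.
    assert (D2 : k^2 * (A*C - B^2) = 0) by (rewrite <- D; ring).
    apply Rmult_integral in D2. destruct D2 as [D2|D2]; [|exact D2].
    exfalso. apply K. apply (pow_eq_zero_R _ _ D2) || nra.
Qed.

Theorem mainTheorem7 (f1 f2 : R -> R -> R) :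
  smooth2 f1 -> smooth2 f2 ->
  (* p = origin lies on S and e1, e2 span T_pS (adapted frame) *)
  f1 0 0 = 0 -> f2 0 0 = 0 ->
  PDx f1 0 0 = 0 -> PDy f1 0 0 = 0 -> PDx f2 0 0 = 0 -> PDy f2 0 0 = 0 ->
  (* p is a flat inflection point, II read off from the Monge form *)
  flat_inflection_point
    (PDx (PDx f1) 0 0) (PDy (PDx f1) 0 0) (PDy (PDy f1) 0 0)
    (PDx (PDx f2) 0 0) (PDy (PDx f2) 0 0) (PDy (PDy f2) 0 0) ->
  forall n3 n4 : R, n3 ^ 2 + n4 ^ 2 = 1 ->
    (* the projected surface is the graph of the third coordinate *)
    gauss_curv_graph
      (fun x y => snd (proj_nu n3 n4 (monge_surface f1 f2 x y))) 0 0 = 0.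
Proof.
  intros S1 S2 _ _ _ _ _ _ FI n3 n4 _.
  assert (Eh : (fun x y => snd (proj_nu n3 n4 (monge_surface f1 f2 x y)))
               = lin (-n4) n3 f1 f2) by reflexivity.
  rewrite Eh.
  assert (X0 : forall h, smooth2 h -> forall x y, ex_derive (fun t => h t y) x)
    by (intros h Sh x y; exact (proj1 (Sh nil x y))).
  assert (Y0 : forall h, smooth2 h -> forall x y, ex_derive (fun t => h x t) y)
    by (intros h Sh x y; exact (proj2 (Sh nil x y))).
  assert (X1 : forall h, smooth2 h -> forall x y, ex_derive (fun t => PDx h t y) x)
    by (intros h Sh x y; exact (proj1 (Sh (true::nil) x y))).
  assert (Y1 : forall h, smooth2 h -> forall x y, ex_derive (fun t => PDx h x t) y)
    by (intros h Sh x y; exact (proj2 (Sh (true::nil) x y))).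
  assert (Y2 : forall h, smooth2 h -> forall x y, ex_derive (fun t => PDy h x t) y)
    by (intros h Sh x y; exact (proj2 (Sh (false::nil) x y))).
  unfold gauss_curv_graph.
  rewrite (PDx_lin _ _ f1 f2 (X0 _ S1) (X0 _ S2)).
  rewrite (PDy_lin _ _ f1 f2 (Y0 _ S1) (Y0 _ S2)).
  rewrite (PDx_lin _ _ _ _ (X1 _ S1) (X1 _ S2)).
  rewrite (PDy_lin _ _ _ _ (Y1 _ S1) (Y1 _ S2)).
  rewrite (PDy_lin _ _ _ _ (Y2 _ S1) (Y2 _ S2)).
  unfold lin.
  set (a := PDx (PDx f1) 0 0) in *. set (b := PDy (PDx f1) 0 0) in *.
  set (c := PDy (PDy f1) 0 0) in *. set (e := PDx (PDx f2) 0 0) in *.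
  set (f := PDy (PDx f2) 0 0) in *. set (g := PDy (PDy f2) 0 0) in *.
  destruct FI as [A [B [_ [Hiff HAB]]]].
  assert (Hon : forall u1 u2, u1^2+u2^2 = 1 -> on_segment A B (II a b c e f g u1 u2)).
  { intros u1 u2 Hu. apply Hiff. exists u1, u2. split; auto. }
  assert (Num : (-n4*a + n3*e)*(-n4*c + n3*g) - (-n4*b + n3*f)^2 = 0).
  { destruct HAB as [HA|HB].
    - apply (key a b c e f g (fst B) (snd B)).
      + intros u1 u2 Hu. destruct (Hon u1 u2 Hu) as [s [Hs E]].
        rewrite HA in E. unfold II in E. injection E; intros E2 E1.
        exists s. split; [lra|]. simpl in *; split; nra.
      + assert (O : on_segment A B (0,0)) by (exists 0; rewrite HA; split; [lra|]; f_equal; simpl; ring).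
        apply Hiff in O. destruct O as [u1 [u2 [Hu E]]]. unfold II in E.
        injection E; intros E2 E1. exists u1, u2. auto.
    - apply (key a b c e f g (fst A) (snd A)).
      + intros u1 u2 Hu. destruct (Hon u1 u2 Hu) as [s [Hs E]].
        rewrite HB in E. unfold II in E. injection E; intros E2 E1.
        exists (1-s). split; [lra|]. simpl in *; split; nra.
      + assert (O : on_segment A B (0,0)) by (exists 1; rewrite HB; split; [lra|]; f_equal; simpl; ring).
        apply Hiff in O. destruct O as [u1 [u2 [Hu E]]]. unfold II in E.
        injection E; intros E2 E1. exists u1, u2. auto. }
  replace ((-n4 * a + n3 * e) * (-n4 * c + n3 * g) - (-n4 * b + n3 * f) ^ 2) with 0 by (rewrite <- Num; ring).
  unfold Rdiv. ring.
Qed.
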